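(* For every admissible sequence of bins $\sigma$ and all integers $s',\ell',k\ge 0$ with $k\ge s'+2\ell'$, $$R(\sigma,s'+2\ell',0)\le \mathrm{OPT}(\sigma,s',\ell')+(k-s'-\ell'-1)L+M.$$
   Context: Fix an integer $S>1$, $L=2S-1$, $M=4S-3$. Bins have integer sizes in $[S,M]$ and arrive in a sequence $\sigma$, admissible if it ends with at least as many bins of size $M$ as there are items under consideration. A packing assigns every item to a bin with total item size in each bin at most the bin size; its cost is the sum of the sizes of bins receiving at least one item. A packing is valid if each empty bin is smaller than every item packed in a later bin. A bin is wasteful if its empty space is at least the size of some item packed in a later bin; a packing is thrifty if no bin is wasteful. A partial packing of a finite sequence of bins is reasonable if every bin $b$ of that sequence contains: one item of size $S$ if $\mathrm{size}(b)\in[S,L-1]$; one item of size $L$ if $\mathrm{size}(b)=L$; two items of size $S$ or one item of size $L$ if $\mathrm{size}(b)\in[L+1,L+S-1]$; one item of size $S$ and one of size $L$ if $\mathrm{size}(b)=L+S$; three items of size $S$ or one item of size $S$ and one of size $L$ if $\mathrm{size}(b)\in[L+S+1,2L-1]$. The key bin of a packing is the first bin after which no item of size $L$ remains unpacked or at most two items of size $S$ remain unpacked; the front is the restriction of the packing to the prefix ending with the key bin. A packing is reasonable if it is thrifty and its front is reasonable. $\mathrm{OPT}(\sigma,s,\ell)$ is the minimum cost of a valid packing of $s$ items of size $S$ and $\ell$ items of size $L$ into $\sigma$; $R(\sigma,s,\ell)$ is the maximum cost of a reasonable packing of these items into $\sigma$. *)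

(* Defs.v *)
From mathcomp Require Import all_boot all_order all_algebra.
Set Implicit Arguments. Unset Strict Implicit. Unset Printing Implicit Defensive.

Definition Lsz (S : nat) : nat := 2 * S - 1.
Definition Msz (S : nat) : nat := 4 * S - 3.

(* A (finite) sequence of bins is a list of bin sizes; bin i (0-indexed)
   has size  nth 0 sigma i. *)
Definition bin_sizes_ok (S : nat) (sigma : seq nat) : Prop :=
  all (fun x => (S <= x <= Msz S)%N) sigma.

Definition admissible (S : nat) (sigma : seq nat) (n : nat) : Prop :=
  (n <= size sigma)%N /\
  all (fun x => x == Msz S) (drop (size sigma - n) sigma).

(* A packing of items of sizes S and L into sigma is represented by
   a i = number of items of size S in bin i,
   b i = number of items of size L in bin i
   (items of equal size are interchangeable). *)
Definition load (S : nat) (a b : nat -> nat) (i : nat) : nat :=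
  a i * S + b i * Lsz S.

Definition is_packing (S : nat) (sigma : seq nat) (s l : nat)
    (a b : nat -> nat) : Prop :=
  (forall i, (size sigma <= i)%N -> a i = 0 /\ b i = 0) /\
  (\sum_(i < size sigma) a i)%N = s /\
  (\sum_(i < size sigma) b i)%N = l /\
  (forall i, (i < size sigma)%N -> (load S a b i <= nth 0 sigma i)%N).

Definition cost (sigma : seq nat) (a b : nat -> nat) : nat :=
  (\sum_(i < size sigma | (0 < a i + b i)%N) nth 0 sigma i)%N.

Definition valid (S : nat) (sigma : seq nat) (a b : nat -> nat) : Prop :=
  forall i j, (i < j)%N -> (j < size sigma)%N -> a i + b i = 0 ->
    ((0 < a j)%N -> (nth 0 sigma i < S)%N) /\
    ((0 < b j)%N -> (nth 0 sigma i < Lsz S)%N).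

Definition valid_packing (S : nat) (sigma : seq nat) (s l : nat)
    (a b : nat -> nat) : Prop :=
  is_packing S sigma s l a b /\ valid S sigma a b.

Definition wasteful (S : nat) (sigma : seq nat) (a b : nat -> nat) (i : nat)
    : Prop :=
  exists j, (i < j)%N /\ (j < size sigma)%N /\
    (((0 < a j)%N /\ (S <= nth 0 sigma i - load S a b i)%N) \/
     ((0 < b j)%N /\ (Lsz S <= nth 0 sigma i - load S a b i)%N)).

Definition thrifty (S : nat) (sigma : seq nat) (a b : nat -> nat) : Prop :=
  forall i, (i < size sigma)%N -> ~ wasteful S sigma a b i.

Definition reasonable_bin (S : nat) (sigma : seq nat) (a b : nat -> nat)
    (i : nat) : Prop :=
  let x := nth 0 sigma i in
  let L := Lsz S in
  ((S <= x <= L - 1)%N -> a i = 1 /\ b i = 0) /\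
  (x = L -> a i = 0 /\ b i = 1) /\
  ((L + 1 <= x <= L + S - 1)%N -> (a i = 2 /\ b i = 0) \/ (a i = 0 /\ b i = 1)) /\
  (x = L + S -> a i = 1 /\ b i = 1) /\
  ((L + S + 1 <= x <= 2 * L - 1)%N ->
      (a i = 3 /\ b i = 0) \/ (a i = 1 /\ b i = 1)).

Definition key_cond (s l : nat) (a b : nat -> nat) (n : nat) : Prop :=
  (\sum_(j < n) b j)%N = l \/ (s <= \sum_(j < n) a j + 2)%N.

(* Bin i (0-indexed) belongs to the front iff the key condition fails after
   each of the prefixes of length 0, 1, ..., i; i.e. the front is the prefix
   of length n0 = the least n with key_cond n. *)
Definition in_front (s l : nat) (a b : nat -> nat) (i : nat) : Prop :=
  forall n, (n <= i)%N -> ~ key_cond s l a b n.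

Definition reasonable_packing (S : nat) (sigma : seq nat) (s l : nat)
    (a b : nat -> nat) : Prop :=
  is_packing S sigma s l a b /\ thrifty S sigma a b /\
  (forall i, (i < size sigma)%N -> in_front s l a b i ->
     reasonable_bin S sigma a b i).

(* Main.v *)
Require Import Defs.
From mathcomp Require Import all_boot all_order all_algebra.
From mathcomp Require Import zify.
From Stdlib Require Import Classical.
Import Order.TTheory GRing.Theory Num.Theory.

Lemma sum0_pt (N : nat) (f : nat -> nat) :
  (\sum_(i < N) f i)%N = 0 -> forall i, (i < N)%N -> f i = 0.
Proof.
move=> H i Hi; apply/eqP; rewrite -leqn0 -H.
by rewrite (bigD1 (Ordinal Hi)) //= leq_addr.
Qed.

Lemma sumpos_ex (N : nat) (f : nat -> nat) :
  (0 < \sum_(i < N) f i)%N -> exists i, (i < N)%N /\ (0 < f i)%N.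
Proof.
case: (boolP [exists i : 'I_N, 0 < f i]) => [/existsP [i Hi]|/existsPn H].
  by move=> _; exists i.
rewrite big1 // => i _; move: (H i); rewrite lt0n negbK => /eqP.
by [].
Qed.

Lemma sum_cost (sigma : seq nat) a b :
  cost sigma a b = (\sum_(i < size sigma)
     (if (0 < a i + b i)%N then nth 0 sigma i else 0))%N.
Proof. by rewrite /cost big_mkcond. Qed.

Lemma sum_ind (N t M : nat) : (t < N)%N ->
  (\sum_(i < N) ((i == t :> nat) * M))%N = M.
Proof.
move=> Ht; rewrite (bigD1 (Ordinal Ht)) //= eqxx mul1n big1 ?addn0 //.
move=> i /eqP Hi; case: eqP => // E; exfalso; apply: Hi; exact: val_inj.
Qed.

Theorem lemma7 (S : nat) (sigma : seq nat) (s' l' k : nat) :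
  (1 < S)%N ->
  bin_sizes_ok S sigma ->
  admissible S sigma (s' + 2 * l') ->
  (s' + 2 * l' <= k)%N ->
  forall aR bR aO bO : nat -> nat,
    reasonable_packing S sigma (s' + 2 * l') 0 aR bR ->
    valid_packing S sigma s' l' aO bO ->
    ((cost sigma aR bR)%:Z <=
       (cost sigma aO bO)%:Z
       + (k%:Z - s'%:Z - l'%:Z - 1) * (Lsz S)%:Z + (Msz S)%:Z)%R.
Proof.
move=> HS Hok _ Hk aR bR aO bO [[_ [HaR [HbR HlR]]] [Hthr _]]
  [[_ [HaO [HbO HlO]]] Hval].
set N := size sigma in HaR HbR HlR HaO HbO HlO Hthr Hval *.
have Hsz : forall i, (i < N)%N -> (S <= nth 0 sigma i <= Msz S)%N.
  move=> i Hi; move/allP: Hok; apply; exact: mem_nth.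
have HbR0 := @sum0_pt _ _ HbR.
have HLM : (Lsz S <= Msz S)%N by rewrite /Lsz /Msz; lia.
have Hfin1 : (cost sigma aR bR <= cost sigma aO bO)%N ->
   ((cost sigma aR bR)%:Z <= (cost sigma aO bO)%:Z
       + (k%:Z - s'%:Z - l'%:Z - 1) * (Lsz S)%:Z + (Msz S)%:Z)%R.
  move=> H; move: HLM; rewrite /Lsz /Msz => HLM'; nia.
case: (posnP (s' + 2 * l')) => Hn.
  apply: Hfin1; rewrite sum_cost big1 // => i _.
  have := @sum0_pt _ _ (etrans HaR Hn) _ (ltn_ord i).
  by rewrite (HbR0 _ (ltn_ord i)) => ->.
have Hex : exists i, (fun i => ((i < N) && (0 < aR i))%N) i.
  have Hpos : (0 < \sum_(i < N) aR i)%N by rewrite HaR.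
  have [i [Hi Hai]] := @sumpos_ex N aR Hpos.
  by exists i; rewrite Hi Hai.
have Hub : forall i, (fun i => ((i < N) && (0 < aR i))%N) i -> (i <= N)%N.
  by move=> i /andP[/ltnW].
case: (ex_maxnP Hex Hub) => t /andP[HtN Hat] Hmax.
have Hafter : forall i, (t < i)%N -> (i < N)%N -> aR i = 0.
  move=> i Hti HiN; case: (posnP (aR i)) => // Hp.
  have := Hmax i; rewrite HiN Hp /= => /(_ isT); lia.
have Hbefore : forall i, (i < t)%N ->
    (0 < aR i)%N /\ (nth 0 sigma i < aR i * S + S)%N.
  move=> i Hit; have HiN : (i < N)%N by apply: ltn_trans HtN.
  have Hnw := Hthr i HiN.
  have Hload := HlR i HiN; rewrite /load HbR0 // mul0n addn0 in Hload.
  have notw : ~ (S <= nth 0 sigma i - aR i * S)%N.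
    move=> H; apply: Hnw; exists t; split=> //; split=> //; left; split=> //.
    by rewrite /load HbR0 // mul0n addn0.
  have /andP[Hs1 Hs2] := Hsz i HiN.
  split.
    case: (posnP (aR i)) => // E; exfalso; apply: notw; by rewrite E mul0n subn0.
  lia.
case: (classic (exists j, (t <= j)%N /\ (j < N)%N /\ (0 < aO j)%N)).
  move=> [j [Htj [HjN Haj]]].
  apply: Hfin1; rewrite !sum_cost; apply: leq_sum => i _.
  have HiN := ltn_ord i.
  case: (ltnP t i) => Hti.
    by rewrite (Hafter _ Hti HiN) (HbR0 _ HiN).
  have -> : (0 < aO i + bO i)%N.
    case: (ltngtP i j) => Hij.
    - case: (posnP (aO i + bO i)) => // E.
      have [H1 _] := Hval i j Hij HjN E.
      have /andP[Hs1 _] := Hsz i HiN.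
      have := H1 Haj; lia.
    - lia.
    - rewrite Hij; lia.
  by case: ifP.
move=> Hno.
have HaO0 : forall j, (t <= j)%N -> (j < N)%N -> aO j = 0.
  move=> j Htj HjN; case: (posnP (aO j)) => // Hp; exfalso; apply: Hno.
  by exists j.
set L := Lsz S; set M := Msz S.
have key : (\sum_(i < N) ((if (0 < aR i + bR i)%N then nth 0 sigma i else 0)
     + L * (aO i + bO i) + (i == t :> nat) * L) <=
   \sum_(i < N) ((if (0 < aO i + bO i)%N then nth 0 sigma i else 0)
     + L * aR i + (i == t :> nat) * M))%N.
  apply: leq_sum => i _.
  have HiN := ltn_ord i.
  have HlOi := HlO i HiN; rewrite /load in HlOi.
  have /andP[Hs1 Hs2] := Hsz i HiN.
  rewrite (HbR0 _ HiN) addn0.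
  move: HlOi Hs1 Hs2 HLM; rewrite /L /M /Lsz /Msz.
  case: (ltngtP i t) => Hit.
  - have [Hp Hlt] := Hbefore i Hit.
    rewrite Hp; case: ifP => Hxy; rewrite ?mul0n ?addn0.
      have : ((aO i + bO i) * S <= aO i * S + bO i * (2 * S - 1))%N by nia.
      move=> HH Hl Hs1 Hs2 _. have : ((aO i + bO i) * S < (aR i).+1 * S)%N by lia.
      rewrite ltn_pmul2r; last lia.
      move=> H; rewrite leq_add2l leq_mul2l -ltnS H orbT //.
    move/negbT: Hxy; rewrite -leqNgt leqn0 addn_eq0 => /andP[/eqP -> /eqP ->].
    move=> Hl Hs1 Hs2 _; nia.
  - rewrite (Hafter _ Hit HiN) (HaO0 _ (ltnW Hit) HiN) /=.
    case: ifP => Hxy; rewrite ?mul0n ?addn0 /=; first nia.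
    move/negbT: Hxy; rewrite -leqNgt leqn0 add0n => /eqP ->; lia.
  - rewrite Hit (HaO0 _ (leqnn _) HtN) ?eqxx !mul1n add0n.
    idtac.
    case: ifP => Hp; last by rewrite Hat in Hp.
    case: ifP => Hxy; first nia.
    move/negbT: Hxy; rewrite -eqn0Ngt => /eqP ->; nia.
rewrite !big_split /= -!big_distrr /= big_split /= !sum_ind // HaO HbO HaR in key.
rewrite -!sum_cost in key.
nia.
Qed.
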